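(* Let $v,w\in\mathbb{Z}^2$ be primitive with $v\times w=1$, and let $u_1,\dots,u_n\in\mathbb{Z}^2$ be primitive normals of lines through the origin subdividing the wedge determined by $v,w$ (each $u_i$ a positive linear combination of $v$ and $w$, listed counterclockwise), such that $v\times u_1=u_i\times u_{i+1}=u_n\times w=1$ for $1\le i\le n-1$. Set $u_0=v$, $u_{n+1}=w$. Let $z\in\mathbb{C}$ and $\underline\omega\in\mathbb{C}^2$ with $\underline\omega\times u_i\notin\mathbb{R}$ for $0\le i\le n+1$. Then $$\prod_{i=0}^{n}\big(e^{2\pi iz}\,\big|\,e^{2\pi i\,\underline\omega\times u_i},e^{-2\pi i\,\underline\omega\times u_{i+1}}\big)_\infty=\big(e^{2\pi iz}\,\big|\,e^{2\pi i\,\underline\omega\times v},e^{-2\pi i\,\underline\omega\times w}\big)_\infty.$$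
   Context: For $a,b\in\mathbb{C}^2$, $a\times b=\det[a,b]=a_1b_2-a_2b_1$. q-shifted factorial: for $x\in\mathbb{C}$ and $q_j=e^{2\pi i\omega_j}$, $\omega_j\in\mathbb{C}\setminus\mathbb{R}$: if all $|q_j|<1$, $(x|q_0,q_1)_\infty=\prod_{j_0,j_1\ge0}(1-xq_0^{j_0}q_1^{j_1})$; in general (symmetric in the $q_j$), if $|q_0|>1>|q_1|$ then $(x|q_0,q_1)_\infty=(q_0^{-1}x|q_0^{-1},q_1)_\infty^{-1}$, and if both $|q_0|,|q_1|>1$ then $(x|q_0,q_1)_\infty=(q_0^{-1}q_1^{-1}x|q_0^{-1},q_1^{-1})_\infty$. *)

(* Defs.v *)
From Stdlib Require Import Reals ZArith.
From Coquelicot Require Import Coquelicot.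
Open Scope R_scope.

Definition cexp (z : C) : C :=
  Cmult (RtoC (exp (Re z))) (cos (Im z), sin (Im z)).

Definition two_pi_i : C := (0, 2 * PI).

Fixpoint cpow (q : C) (n : nat) : C :=
  match n with O => RtoC 1 | S k => Cmult (cpow q k) q end.

Fixpoint cprod (n : nat) (f : nat -> C) : C :=
  match n with O => RtoC 1 | S k => Cmult (cprod k f) (f k) end.

Definition zcross (a b : Z * Z) : Z := (fst a * snd b - snd a * fst b)%Z.
Definition ccross (om : C * C) (u : Z * Z) : C :=
  Cminus (Cmult (fst om) (RtoC (IZR (snd u)))) (Cmult (snd om) (RtoC (IZR (fst u)))).

Definition zprimitive (u : Z * Z) : Prop := Z.gcd (fst u) (snd u) = 1%Z.

Definition qpoch_partial (x q0 q1 : C) (N : nat) : C :=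
  cprod N (fun j0 => cprod N (fun j1 =>
     Cminus (RtoC 1) (Cmult x (Cmult (cpow q0 j0) (cpow q1 j1))))).

(* (x | q0, q1)_oo for |q0|,|q1| < 1 : limit of the partial products
   (componentwise limit of real and imaginary parts) *)
Definition qpoch0 (x q0 q1 : C) : C :=
  (real (Lim_seq (fun N => Re (qpoch_partial x q0 q1 N))),
   real (Lim_seq (fun N => Im (qpoch_partial x q0 q1 N)))).

(* general (x | q0, q1)_oo for |q0|, |q1| <> 1 *)
Definition qpoch (x q0 q1 : C) : C :=
  if Rlt_dec (Cmod q0) 1 then
    if Rlt_dec (Cmod q1) 1 then qpoch0 x q0 q1
    else Cinv (qpoch0 (Cdiv x q1) q0 (Cinv q1))
  else
    if Rlt_dec (Cmod q1) 1 then Cinv (qpoch0 (Cdiv x q0) (Cinv q0) q1)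
    else qpoch0 (Cdiv x (Cmult q0 q1)) (Cinv q0) (Cinv q1).

(* (x | q0, q1)_oo is a well-defined (finite) value: no division by a
   vanishing product occurs in the mixed cases. *)
Definition qpoch_defined (x q0 q1 : C) : Prop :=
  if Rlt_dec (Cmod q0) 1 then
    if Rlt_dec (Cmod q1) 1 then True
    else qpoch0 (Cdiv x q1) q0 (Cinv q1) <> RtoC 0
  else
    if Rlt_dec (Cmod q1) 1 then qpoch0 (Cdiv x q0) (Cinv q0) q1 <> RtoC 0
    else True.

(* Main.v *)
Require Import Defs.
From Stdlib Require Import Reals ZArith Lia Lra.
From Coquelicot Require Import Coquelicot.
Open Scope R_scope.

Fixpoint rsum (n : nat) (f : nat -> R) : R :=
  match n with O => 0 | S k => rsum k f + f k end.

Lemma cprod_ext n f g : (forall i, (i < n)%nat -> f i = g i) -> cprod n f = cprod n g.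
Proof.
  induction n; intros H; simpl; auto.
  rewrite IHn by (intros; apply H; lia). rewrite H by lia. auto.
Qed.

Lemma cprod_mult n f g : cprod n (fun i => Cmult (f i) (g i)) = Cmult (cprod n f) (cprod n g).
Proof. induction n; simpl. ring. rewrite IHn. ring. Qed.

Lemma cprod_split a b f : cprod (a + b) f = Cmult (cprod a f) (cprod b (fun k => f (a + k)%nat)).
Proof.
  induction b; simpl. rewrite Nat.add_0_r. ring.
  rewrite Nat.add_succ_r. simpl. rewrite IHb. ring.
Qed.

Lemma cprod_fubini n m f :
  cprod n (fun i => cprod m (fun j => f i j)) = cprod m (fun j => cprod n (fun i => f i j)).
Proof.
  induction n; simpl.
  - induction m; simpl; auto. rewrite <- IHm. ring.
  - rewrite IHn. rewrite <- cprod_mult. auto.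
Qed.

Lemma rsum_ext n f g : (forall i, (i < n)%nat -> f i = g i) -> rsum n f = rsum n g.
Proof.
  induction n; intros H; simpl; auto.
  rewrite IHn by (intros; apply H; lia). rewrite H by lia. auto.
Qed.

Lemma rsum_le n f g : (forall i, (i < n)%nat -> f i <= g i) -> rsum n f <= rsum n g.
Proof.
  induction n; intros H; simpl. lra.
  assert (rsum n f <= rsum n g) by (apply IHn; intros; apply H; lia).
  assert (f n <= g n) by (apply H; lia). lra.
Qed.

Lemma rsum_scal n c f : rsum n (fun i => c * f i) = c * rsum n f.
Proof. induction n; simpl. ring. rewrite IHn. ring. Qed.

Lemma rsum_geom n r : r < 1 -> 0 <= r -> rsum n (fun i => r ^ i) <= / (1 - r).
Proof.
  intros H1 H0.
  assert (E : rsum n (fun i => r ^ i) * (1 - r) = 1 - r ^ n).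
  { induction n; simpl. ring. rewrite Rmult_plus_distr_r, IHn. ring. }
  assert (0 <= r ^ n) by (apply pow_le; auto).
  apply Rmult_le_reg_r with (1 - r). lra.
  rewrite E, Rinv_l by lra. lra.
Qed.

Lemma exp_m1_le y : 0 <= y -> exp y - 1 <= y * exp y.
Proof.
  intros H. pose proof (exp_ineq1_le (- y)).
  assert (exp y * exp (- y) = 1) by (rewrite <- exp_plus; replace (y + - y) with 0 by ring; apply exp_0).
  pose proof (exp_pos y). nra.
Qed.

Lemma cprod_est n (c : nat -> C) (b : nat -> R) :
  (forall i, (i < n)%nat -> Cmod (Cminus (c i) 1) <= exp (b i) - 1) ->
  Cmod (Cminus (cprod n c) 1) <= exp (rsum n b) - 1.
Proof.
  induction n; intros H; simpl.
  - replace (Cminus 1 1) with (RtoC 0) by ring. rewrite Cmod_0, exp_0. lra.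
  - assert (IH := IHn (fun i Hi => H i (Nat.lt_lt_succ_r _ _ Hi))).
    assert (Hn := H n (Nat.lt_succ_diag_r n)).
    replace (Cminus (Cmult (cprod n c) (c n)) 1) with
      (Cplus (Cmult (Cminus (cprod n c) 1) (c n)) (Cminus (c n) 1)) by ring.
    eapply Rle_trans. apply Cmod_triangle. rewrite Cmod_mult.
    assert (Hc : Cmod (c n) <= exp (b n)).
    { replace (c n) with (Cplus (Cminus (c n) 1) 1) by ring.
      eapply Rle_trans. apply Cmod_triangle. rewrite Cmod_1. lra. }
    rewrite exp_plus.
    pose proof (Cmod_ge_0 (Cminus (cprod n c) 1)).
    pose proof (Cmod_ge_0 (c n)).
    assert (0 <= exp (rsum n b) - 1) by lra.
    nra.
Qed.

Lemma cprod_bound n (c : nat -> C) (b : nat -> R) :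
  (forall i, (i < n)%nat -> Cmod (Cminus (c i) 1) <= exp (b i) - 1) ->
  Cmod (cprod n c) <= exp (rsum n b).
Proof.
  intros H. apply cprod_est in H.
  replace (cprod n c) with (Cplus (Cminus (cprod n c) 1) 1) by ring.
  eapply Rle_trans. apply Cmod_triangle. rewrite Cmod_1. lra.
Qed.

Lemma factor_est (a : C) : Cmod (Cminus (Cminus 1 a) 1) <= exp (Cmod a) - 1.
Proof.
  replace (Cminus (Cminus 1 a) 1) with (Copp a) by ring. rewrite Cmod_opp.
  pose proof (exp_ineq1_le (Cmod a)). lra.
Qed.

Lemma cpow_mod q n : Cmod (cpow q n) = Cmod q ^ n.
Proof. induction n; simpl. apply Cmod_1. rewrite Cmod_mult, IHn. ring. Qed.

Lemma cpow_add q a b : cpow q (a + b) = Cmult (cpow q a) (cpow q b).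
Proof. induction b; simpl. rewrite Nat.add_0_r. ring. rewrite Nat.add_succ_r. simpl. rewrite IHb. ring. Qed.

Lemma cpow_mul p q a : cpow (Cmult p q) a = Cmult (cpow p a) (cpow q a).
Proof. induction a; simpl. ring. rewrite IHa. ring. Qed.

Lemma exp_le a b : a <= b -> exp a <= exp b.
Proof. intros H. destruct (Req_dec a b). subst; lra. left; apply exp_increasing; lra. Qed.

Definition sq N (g : nat -> nat -> C) := cprod N (fun j0 => cprod N (fun j1 => g j0 j1)).
Definition triT N (g : nat -> nat -> C) := cprod N (fun j => cprod (N - j) (fun k => g j (j + k)%nat)).
Definition triU N (g : nat -> nat -> C) := cprod N (fun j => cprod (N - 1 - j) (fun m => g (j + m + 1)%nat j)).

Lemma sq_S N g : sq (S N) g = Cmult (Cmult (sq N g) (cprod N (g N))) (cprod (S N) (fun j0 => g j0 N)).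
Proof.
  unfold sq. simpl (cprod (S N) (fun j1 => _)).
  rewrite cprod_mult. simpl. change (cprod N (fun j1 => g N j1)) with (cprod N (g N)). ring.
Qed.

Lemma sq_tri N g : sq N g = Cmult (triT N g) (triU N g).
Proof.
  induction N.
  - unfold sq, triT, triU; simpl. ring.
  - rewrite sq_S, IHN.
    assert (HT : triT (S N) g = Cmult (triT N g) (cprod (S N) (fun j => g j N))).
    { unfold triT.
      rewrite (cprod_ext (S N) _ (fun j => Cmult (cprod (N - j) (fun k => g j (j + k)%nat)) (g j N)));
      [| intros i Hi; replace (S N - i)%nat with (S (N - i)) by lia; simpl;
          replace (i + (N - i))%nat with N by lia; auto].
      rewrite cprod_mult. f_equal. simpl. rewrite Nat.sub_diag. simpl. ring. }
    assert (HU : triU (S N) g = Cmult (triU N g) (cprod N (g N))).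
    { unfold triU. replace (S N - 1)%nat with N by lia. simpl (cprod (S N) _) at 1.
      rewrite Nat.sub_diag. simpl.
      rewrite (cprod_ext N _ (fun j => Cmult (cprod (N - 1 - j) (fun m => g (j + m + 1)%nat j)) (g N j)));
      [| intros i Hi; replace (N - i)%nat with (S (N - 1 - i)) by lia; simpl;
          replace (i + (N - 1 - i) + 1)%nat with N by lia; auto].
      rewrite cprod_mult. ring. }
    rewrite HT, HU. ring.
Qed.

Definition Ccv (u : nat -> C) (l : C) : Prop :=
  is_lim_seq (fun n => Re (u n)) (Re l) /\ is_lim_seq (fun n => Im (u n)) (Im l).

Lemma Cmod_le_sum (c : C) : Cmod c <= Rabs (Re c) + Rabs (Im c).
Proof.
  destruct c as [p q]. simpl.
  replace (p, q) with (Cplus (RtoC p) (Cmult (RtoC q) Ci)).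
  2:{ unfold RtoC, Ci, Cplus, Cmult; simpl. f_equal; ring. }
  eapply Rle_trans. apply Cmod_triangle. rewrite Cmod_mult, Cmod_Ci, !Cmod_R. lra.
Qed.

Lemma re_le (c : C) : Rabs (Re c) <= Cmod c.
Proof. pose proof (Rmax_Cmod c). pose proof (Rmax_l (Rabs (fst c)) (Rabs (snd c))). unfold Re. lra. Qed.
Lemma im_le (c : C) : Rabs (Im c) <= Cmod c.
Proof. pose proof (Rmax_Cmod c). pose proof (Rmax_r (Rabs (fst c)) (Rabs (snd c))). unfold Im. lra. Qed.

Lemma Ccv_of_eps u l :
  (forall eps, 0 < eps -> exists N, forall n, (N <= n)%nat -> Cmod (Cminus (u n) l) < eps) ->
  Ccv u l.
Proof.
  intros H. split; apply is_lim_seq_Reals; intros eps Heps;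
  destruct (H eps Heps) as [N HN]; exists N; intros n Hn; unfold Rdist;
  specialize (HN n Hn).
  - pose proof (re_le (Cminus (u n) l)). unfold Re in *. simpl in *. unfold Rminus; lra.
  - pose proof (im_le (Cminus (u n) l)). unfold Im in *. simpl in *. unfold Rminus; lra.
Qed.

Lemma Ccv_mult u v a b : Ccv u a -> Ccv v b -> Ccv (fun n => Cmult (u n) (v n)) (Cmult a b).
Proof.
  intros [Hu1 Hu2] [Hv1 Hv2]. split; simpl.
  - apply is_lim_seq_minus'; apply is_lim_seq_mult'; auto.
  - apply is_lim_seq_plus'; apply is_lim_seq_mult'; auto.
Qed.

Lemma Ccv_ext u v l : (forall n, u n = v n) -> Ccv u l -> Ccv v l.
Proof.
  intros H [H1 H2]. split; eapply is_lim_seq_ext; try eassumption; intros; simpl; rewrite H; auto.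
Qed.

Lemma Ccv_unique u a b : Ccv u a -> Ccv u b -> a = b.
Proof.
  intros [H1 H2] [H3 H4].
  apply is_lim_seq_unique in H1, H2, H3, H4.
  rewrite H1 in H3. rewrite H2 in H4. injection H3. injection H4. intros.
  destruct a, b. simpl in *. congruence.
Qed.

Lemma qpoch0_lim x s t l : Ccv (qpoch_partial x s t) l -> qpoch0 x s t = l.
Proof.
  intros [H1 H2]. unfold qpoch0.
  rewrite (is_lim_seq_unique _ _ H1), (is_lim_seq_unique _ _ H2). simpl. destruct l; auto.
Qed.

Lemma exp_small c r : 0 <= c -> 0 <= r < 1 ->
  forall eps, 0 < eps -> exists N, forall n, (N <= n)%nat -> exp (c * r ^ n) - 1 < eps.
Proof.
  intros Hc Hr eps Heps.
  assert (Hk : 0 < (c + 1) * exp c) by (apply Rmult_lt_0_compat; [lra| apply exp_pos]).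
  destruct (pow_lt_1_zero r ltac:(rewrite Rabs_pos_eq; lra) (Rmin 1 (eps / ((c+1) * exp c))))
    as [N HN].
  { apply Rmin_glb_lt. lra. apply Rdiv_lt_0_compat; lra. }
  exists N. intros n Hn. specialize (HN n Hn).
  assert (Hp : 0 <= r ^ n) by (apply pow_le; lra).
  rewrite Rabs_pos_eq in HN by auto.
  pose proof (Rmin_l 1 (eps / ((c+1) * exp c))).
  pose proof (Rmin_r 1 (eps / ((c+1) * exp c))).
  assert (Hy : 0 <= c * r ^ n <= c) by (split; nra).
  pose proof (exp_m1_le (c * r ^ n) (proj1 Hy)).
  assert (exp (c * r ^ n) <= exp c) by (destruct (Req_dec (c * r^n) c) as [E|E]; [rewrite E; lra| left; apply exp_increasing; lra]).
  assert (r ^ n < eps / ((c+1) * exp c)) by lra.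
  assert (r ^ n * ((c+1) * exp c) < eps).
  { apply Rmult_lt_reg_r with (/ ((c+1) * exp c)). apply Rinv_0_lt_compat; lra.
    rewrite Rmult_assoc, Rinv_r by lra. unfold Rdiv in *. lra. }
  pose proof (exp_pos c).
  nra.
Qed.

Lemma est_mono c a b : Cmod (Cminus c 1) <= exp a - 1 -> a <= b -> Cmod (Cminus c 1) <= exp b - 1.
Proof.
  intros H Hab. destruct (Req_dec a b). subst; auto.
  pose proof (exp_increasing a b). lra.
Qed.

Lemma mult_est c1 c2 b1 b2 :
  Cmod (Cminus c1 1) <= exp b1 - 1 -> Cmod (Cminus c2 1) <= exp b2 - 1 ->
  Cmod (Cminus (Cmult c1 c2) 1) <= exp (b1 + b2) - 1.
Proof.
  intros H1 H2.
  pose proof (cprod_est 2 (fun i => match i with O => c1 | _ => c2 end) (fun i => match i with O => b1 | _ => b2 end)).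
  simpl in H. replace (0 + b1 + b2) with (b1 + b2) in H by ring.
  replace (Cmult c1 c2) with (Cmult (Cmult 1 c1) c2) by ring. apply H.
  intros i Hi. destruct i; auto.
Qed.

Lemma dbl_est N (m : nat -> nat) (a : nat -> nat -> C) (K r : R) :
  0 <= r < 1 -> 0 <= K -> (forall j k, Cmod (a j k) <= K * r ^ j * r ^ k) ->
  Cmod (Cminus (cprod N (fun j => cprod (m j) (fun k => Cminus 1 (a j k)))) 1)
   <= exp (K / (1 - r) ^ 2) - 1.
Proof.
  intros Hr HK Ha.
  assert (Hg : forall n, rsum n (fun i => r ^ i) <= / (1 - r)) by (intros; apply rsum_geom; lra).
  assert (Hi : 0 < / (1 - r)) by (apply Rinv_0_lt_compat; lra).
  eapply est_mono. apply cprod_est with (b := fun j => K * r ^ j * / (1 - r)).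
  - intros j _. eapply est_mono. apply cprod_est with (b := fun k => Cmod (a j k)).
    intros k _. apply factor_est.
    eapply Rle_trans. apply rsum_le with (g := fun k => (K * r ^ j) * r ^ k). intros; apply Ha.
    rewrite rsum_scal. apply Rmult_le_compat_l. pose proof (pow_le r j). nra. apply Hg.
  - rewrite (rsum_ext N _ (fun j => (K * / (1 - r)) * r ^ j)) by (intros; ring).
    rewrite rsum_scal. replace (K / (1 - r) ^ 2) with ((K * / (1 - r)) * / (1 - r)).
    apply Rmult_le_compat_l. nra. apply Hg.
    unfold Rdiv. field. lra.
Qed.

Definition gf x s t (j0 j1 : nat) : C := Cminus 1 (Cmult x (Cmult (cpow s j0) (cpow t j1))).

Lemma qp_sq x s t N : qpoch_partial x s t N = sq N (gf x s t).
Proof. reflexivity. Qed.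

Lemma term_bound x s t r a b : Cmod s <= r -> Cmod t <= r ->
  Cmod (Cmult x (Cmult (cpow s a) (cpow t b))) <= Cmod x * r ^ a * r ^ b.
Proof.
  intros Hs Ht. rewrite !Cmod_mult, !cpow_mod.
  pose proof (Cmod_ge_0 s). pose proof (Cmod_ge_0 t). pose proof (Cmod_ge_0 x).
  assert (Cmod s ^ a <= r ^ a) by (apply pow_incr; lra).
  assert (Cmod t ^ b <= r ^ b) by (apply pow_incr; lra).
  pose proof (pow_le (Cmod s) a). pose proof (pow_le (Cmod t) b).
  rewrite Rmult_assoc. apply Rmult_le_compat_l. auto. apply Rmult_le_compat; auto.
Qed.

Lemma sgl_est n (a : nat -> C) K r : 0 <= r < 1 -> 0 <= K ->
  (forall k, Cmod (a k) <= K * r ^ k) ->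
  Cmod (Cminus (cprod n (fun k => Cminus 1 (a k))) 1) <= exp (K / (1 - r)) - 1.
Proof.
  intros Hr HK Ha. eapply est_mono. apply cprod_est with (b := fun k => Cmod (a k)).
  intros; apply factor_est.
  eapply Rle_trans. apply rsum_le with (g := fun k => K * r ^ k). intros; apply Ha.
  rewrite rsum_scal. unfold Rdiv. apply Rmult_le_compat_l. auto. apply rsum_geom; lra.
Qed.

Section Conv.
Variables (x s t : C).
Hypotheses (Hs : Cmod s < 1) (Ht : Cmod t < 1).
Let r := Rmax (Cmod s) (Cmod t).
Lemma r_prop : 0 <= r < 1.
Proof. unfold r. pose proof (Cmod_ge_0 s). split. eapply Rle_trans; [|apply Rmax_l]; lra. apply Rmax_lub_lt; auto. Qed.
Lemma rs : Cmod s <= r. Proof. apply Rmax_l. Qed.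
Lemma rt : Cmod t <= r. Proof. apply Rmax_r. Qed.

Definition RN (N : nat) := Cmult (cprod N (gf x s t N)) (cprod (S N) (fun j0 => gf x s t j0 N)).

Let c' := 2 * Cmod x / (1 - r).

Lemma RN_est N : Cmod (Cminus (RN N) 1) <= exp (c' * r ^ N) - 1.
Proof.
  pose proof r_prop as Hr. pose proof (Cmod_ge_0 x). pose proof (pow_le r N (proj1 Hr)).
  unfold RN. eapply est_mono. apply mult_est.
  - apply sgl_est with (K := Cmod x * r ^ N) (r := r). auto. apply Rmult_le_pos; auto.
    intros k. apply term_bound; [apply rs|apply rt].
  - apply sgl_est with (K := Cmod x * r ^ N) (r := r). auto. apply Rmult_le_pos; auto.
    intros k. eapply Rle_trans. apply term_bound; [apply rs|apply rt]. right; ring.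
  - unfold c'. right. field. lra.
Qed.

Lemma qp_RN N : qpoch_partial x s t N = cprod N RN.
Proof.
  induction N. reflexivity.
  rewrite qp_sq, sq_S, <- qp_sq, IHN. simpl. unfold RN. simpl. ring.
Qed.

Let c := c' / (1 - r).

Lemma c_nonneg : 0 <= c.
Proof. pose proof r_prop. pose proof (Cmod_ge_0 x). unfold c, c'. apply Rmult_le_pos. apply Rmult_le_pos. nra.
  left; apply Rinv_0_lt_compat; lra. left; apply Rinv_0_lt_compat; lra. Qed.

Lemma qp_bound N : Cmod (qpoch_partial x s t N) <= exp c.
Proof.
  pose proof r_prop. pose proof (Cmod_ge_0 x).
  assert (0 <= c') by (unfold c'; apply Rmult_le_pos; [nra| left; apply Rinv_0_lt_compat; lra]).
  rewrite qp_RN. eapply Rle_trans. apply cprod_bound with (b := fun i => c' * r ^ i).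
  intros; apply RN_est. apply exp_le.
  eapply Rle_trans. apply rsum_le with (g := fun i => c' * r ^ i). intros; lra.
  rewrite rsum_scal. unfold c, Rdiv. apply Rmult_le_compat_l. auto. apply rsum_geom; lra.
Qed.

Lemma qp_diff N k : Cmod (Cminus (qpoch_partial x s t (N + k)) (qpoch_partial x s t N))
   <= exp c * (exp (c * r ^ N) - 1).
Proof.
  pose proof r_prop as Hr. pose proof (Cmod_ge_0 x). pose proof (pow_le r N (proj1 Hr)).
  assert (0 <= c') by (unfold c'; apply Rmult_le_pos; [nra| left; apply Rinv_0_lt_compat; lra]).
  rewrite !qp_RN, cprod_split.
  replace (Cminus (Cmult (cprod N RN) (cprod k (fun k0 => RN (N + k0)))) (cprod N RN))
    with (Cmult (cprod N RN) (Cminus (cprod k (fun k0 => RN (N + k0))) 1)) by ring.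
  rewrite Cmod_mult. apply Rmult_le_compat. apply Cmod_ge_0. apply Cmod_ge_0.
  rewrite <- qp_RN. apply qp_bound.
  eapply est_mono. apply cprod_est with (b := fun i => c' * r ^ (N + i)). intros; apply RN_est.
  rewrite (rsum_ext k _ (fun i => (c' * r ^ N) * r ^ i)) by (intros; rewrite pow_add; ring).
  rewrite rsum_scal. apply Rle_trans with (c' * r ^ N * / (1 - r)).
  apply Rmult_le_compat_l. apply Rmult_le_pos; auto. apply rsum_geom; lra.
  unfold c, Rdiv; right; ring.
Qed.

Lemma qp_cauchy eps : 0 < eps -> exists N, forall n, (N <= n)%nat ->
  Cmod (Cminus (qpoch_partial x s t n) (qpoch_partial x s t N)) < eps.
Proof.
  intros He. pose proof r_prop as Hr. pose proof (exp_pos c).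
  destruct (exp_small c r c_nonneg Hr (eps / exp c)) as [N HN].
  apply Rdiv_lt_0_compat; auto.
  exists N. intros n Hn. replace n with (N + (n - N))%nat by lia.
  eapply Rle_lt_trans. apply qp_diff. specialize (HN N (le_n N)).
  apply Rmult_lt_reg_l with (/ exp c). apply Rinv_0_lt_compat; auto.
  rewrite <- Rmult_assoc, Rinv_l by lra. rewrite Rmult_1_l. unfold Rdiv in HN. lra.
Qed.

Lemma qp_conv : exists l, Ccv (qpoch_partial x s t) l.
Proof.
  assert (Hc : forall (f : C -> R), (forall a b, Rabs (f (Cminus a b)) <= Cmod (Cminus a b)) ->
     (forall a b, f (Cminus a b) = f a - f b) ->
     Cauchy_crit (fun n => f (qpoch_partial x s t n))).
  { intros f Hf Hl eps Heps. destruct (qp_cauchy (eps / 2)) as [N HN]. lra.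
    exists N. intros n m Hn Hm. unfold Rdist.
    pose proof (HN n Hn). pose proof (HN m Hm).
    pose proof (Hf (qpoch_partial x s t n) (qpoch_partial x s t N)).
    pose proof (Hf (qpoch_partial x s t m) (qpoch_partial x s t N)).
    rewrite Hl in H1, H2.
    replace (f (qpoch_partial x s t n) - f (qpoch_partial x s t m)) with
      ((f (qpoch_partial x s t n) - f (qpoch_partial x s t N)) + - (f (qpoch_partial x s t m) - f (qpoch_partial x s t N))) by ring.
    eapply Rle_lt_trans. apply Rabs_triang. rewrite Rabs_Ropp. lra. }
  destruct (Rcomplete.R_complete _ (Hc Re (fun a b => re_le _) (fun a b => eq_refl))) as [lr Hr].
  destruct (Rcomplete.R_complete _ (Hc Im (fun a b => im_le _) (fun a b => eq_refl))) as [li Hi].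
  exists (lr, li). split; apply is_lim_seq_Reals; auto.
Qed.
End Conv.

Definition ET x s t N := cprod N (fun j => cprod j (fun k =>
   Cminus 1 (Cmult x (Cmult (cpow s j) (cpow t (N + k)))))).
Definition EU x s t N := cprod N (fun j => cprod (S j) (fun k =>
   Cminus 1 (Cmult x (Cmult (cpow s (N + k)) (cpow t j))))).

Lemma para1 x s t N : qpoch_partial x (Cmult s t) t N = Cmult (triT N (gf x s t)) (ET x s t N).
Proof.
  unfold qpoch_partial, triT, ET. rewrite <- cprod_mult. apply cprod_ext. intros j Hj.
  transitivity (cprod ((N - j) + j) (fun k => Cminus 1 (Cmult x (Cmult (cpow (Cmult s t) j) (cpow t k))))).
  replace ((N - j) + j)%nat with N by lia; reflexivity.
  rewrite cprod_split. f_equal.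
  - apply cprod_ext; intros k _. unfold gf. rewrite cpow_mul, cpow_add. ring.
  - apply cprod_ext; intros k _. rewrite cpow_mul.
    replace (N + k)%nat with (j + (N - j + k))%nat by lia. rewrite (cpow_add t j). ring.
Qed.

Lemma para2 x s t N : qpoch_partial (Cmult x s) (Cmult s t) s N = Cmult (triU N (gf x s t)) (EU x s t N).
Proof.
  unfold qpoch_partial, triU, EU. rewrite <- cprod_mult. apply cprod_ext. intros j Hj.
  transitivity (cprod ((N - 1 - j) + S j) (fun m => Cminus 1 (Cmult (Cmult x s) (Cmult (cpow (Cmult s t) j) (cpow s m))))).
  replace ((N - 1 - j) + S j)%nat with N by lia; reflexivity.
  rewrite cprod_split. f_equal.
  - apply cprod_ext; intros k _. unfold gf.
    replace (j + k + 1)%nat with (S (j + k)) by lia. simpl (cpow s (S _)).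
    rewrite cpow_mul, cpow_add. ring.
  - apply cprod_ext; intros k _. rewrite cpow_mul.
    replace (N + k)%nat with (S (j + (N - 1 - j + k)))%nat by lia. simpl (cpow s (S _)).
    rewrite (cpow_add s j). ring.
Qed.

Lemma qpochL x s t : Cmod s < 1 -> Cmod t < 1 ->
  qpoch0 x s t = Cmult (qpoch0 x (Cmult s t) t) (qpoch0 (Cmult x s) (Cmult s t) s).
Proof.
  intros Hs Ht.
  assert (Hst : Cmod (Cmult s t) < 1).
  { rewrite Cmod_mult. pose proof (Cmod_ge_0 s). pose proof (Cmod_ge_0 t). nra. }
  destruct (qp_conv x s t Hs Ht) as [l1 H1].
  destruct (qp_conv x (Cmult s t) t Hst Ht) as [l2 H2].
  destruct (qp_conv (Cmult x s) (Cmult s t) s Hst Hs) as [l3 H3].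
  rewrite (qpoch0_lim _ _ _ _ H1), (qpoch0_lim _ _ _ _ H2), (qpoch0_lim _ _ _ _ H3).
  set (r := Rmax (Cmod s) (Cmod t)).
  assert (Hr : 0 <= r < 1).
  { unfold r. pose proof (Cmod_ge_0 s). split. eapply Rle_trans; [|apply Rmax_l]; lra. apply Rmax_lub_lt; auto. }
  assert (Hsr : Cmod s <= r) by apply Rmax_l.
  assert (Htr : Cmod t <= r) by apply Rmax_r.
  pose proof (Cmod_ge_0 x) as Hx.
  assert (HE : Ccv (fun N => Cmult (ET x s t N) (EU x s t N)) 1).
  { apply Ccv_of_eps. intros eps He.
    assert (Hc : 0 <= 2 * Cmod x / (1 - r) ^ 2).
    { apply Rmult_le_pos. lra. left. apply Rinv_0_lt_compat. apply pow_lt. lra. }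
    destruct (exp_small _ r Hc Hr eps He) as [N HN]. exists N. intros n Hn.
    eapply Rle_lt_trans; [|apply (HN n Hn)].
    pose proof (pow_le r n (proj1 Hr)).
    eapply est_mono. apply mult_est.
    - apply dbl_est with (K := Cmod x * r ^ n) (r := r). auto. apply Rmult_le_pos; auto.
      intros j k. eapply Rle_trans. apply term_bound; eauto. rewrite pow_add. right; ring.
    - apply dbl_est with (K := Cmod x * r ^ n) (r := r). auto. apply Rmult_le_pos; auto.
      intros j k. eapply Rle_trans. apply term_bound; eauto. rewrite pow_add. right; ring.
    - right. unfold Rdiv. ring. }
  assert (HA := Ccv_mult _ _ _ _ H1 HE).
  assert (HB := Ccv_mult _ _ _ _ H2 H3).
  eapply Ccv_ext in HA.
  2:{ intros N. simpl. rewrite qp_sq, sq_tri, Cmult_assoc. reflexivity. }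
  rewrite <- (Cmult_1_r l1). eapply Ccv_unique. apply HA.
  eapply Ccv_ext. 2: apply HB. intros N. simpl. rewrite para1, para2. ring.
Qed.

Lemma qpoch0_sym x s t : qpoch0 x s t = qpoch0 x t s.
Proof.
  assert (H : forall N, qpoch_partial x s t N = qpoch_partial x t s N).
  { intros N. unfold qpoch_partial. rewrite cprod_fubini.
    apply cprod_ext; intros; apply cprod_ext; intros. f_equal. f_equal. apply Cmult_comm. }
  unfold qpoch0. rewrite (Lim_seq_ext (fun N => Re (qpoch_partial x s t N)) (fun N => Re (qpoch_partial x t s N))),
    (Lim_seq_ext (fun N => Im (qpoch_partial x s t N)) (fun N => Im (qpoch_partial x t s N))); auto;
  intros; rewrite H; auto.
Qed.

Definition E (c : C) : C := cexp (Cmult two_pi_i c).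

Lemma cexp_add a b : cexp (Cplus a b) = Cmult (cexp a) (cexp b).
Proof.
  destruct a as [a1 a2], b as [b1 b2]. unfold cexp. simpl.
  rewrite exp_plus, cos_plus, sin_plus.
  unfold Cmult, RtoC. simpl. f_equal; ring.
Qed.

Lemma E_add a b : E (Cplus a b) = Cmult (E a) (E b).
Proof. unfold E. rewrite <- cexp_add. f_equal. ring. Qed.

Lemma E_0 : E 0 = 1.
Proof. unfold E, cexp. simpl. unfold Cmult, RtoC. simpl.
  replace (0 * 0 - 2 * PI * 0) with 0 by ring. replace (0 * 0 + 2 * PI * 0) with 0 by ring.
  rewrite exp_0, cos_0, sin_0. f_equal; ring. Qed.

Lemma E_opp c : Cmult (E c) (E (Copp c)) = 1.
Proof. rewrite <- E_add. replace (Cplus c (Copp c)) with (RtoC 0) by ring. apply E_0. Qed.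

Lemma E_nz c : E c <> 0.
Proof. intros H. pose proof (E_opp c). rewrite H, Cmult_0_l in H0.
  injection H0. lra. Qed.

Lemma E_inv c : Cinv (E c) = E (Copp c).
Proof.
  pose proof (E_opp c). pose proof (E_nz c).
  replace (Cinv (E c)) with (Cmult (Cinv (E c)) (Cmult (E c) (E (Copp c)))) by (rewrite H; ring).
  rewrite Cmult_assoc, Cinv_l; auto. ring.
Qed.

Lemma Cmod_E c : Cmod (E c) = exp (- (2 * PI) * Im c).
Proof.
  unfold E, cexp. rewrite Cmod_mult, Cmod_R, Rabs_pos_eq by (left; apply exp_pos).
  unfold Cmod. simpl. rewrite !Rmult_1_r. set (th := 0 * snd c + 2 * PI * fst c).
  replace (cos th * cos th + sin th * sin th) with 1 by (pose proof (sin2_cos2 th); unfold Rsqr in *; lra). rewrite sqrt_1.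
  rewrite Rmult_1_r. destruct c; simpl. f_equal. ring.
Qed.

Lemma Cmod_E_lt c : Cmod (E c) < 1 <-> 0 < Im c.
Proof.
  rewrite Cmod_E. pose proof PI_RGT_0 as HP. split; intros H.
  - destruct (Rlt_dec 0 (Im c)); auto.
    assert (H0 : 0 <= - (2 * PI) * Im c) by nra.
    pose proof (exp_le 0 _ H0) as H1. rewrite exp_0 in H1. lra.
  - rewrite <- exp_0. apply exp_increasing. nra.
Qed.

Definition Pe x g d e := qpoch0 (Cmult x (E g)) (E d) (E e).

Lemma PeL x g d e : 0 < Im d -> 0 < Im e ->
  Pe x g d e = Cmult (Pe x g (Cplus d e) e) (Pe x (Cplus g d) (Cplus d e) d).
Proof.
  intros Hd He. unfold Pe. rewrite qpochL by (apply Cmod_E_lt; auto).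
  rewrite !E_add, Cmult_assoc. auto.
Qed.

Lemma Pe_sym x g d e : Pe x g d e = Pe x g e d.
Proof. unfold Pe. apply qpoch0_sym. Qed.

Definition NE x a b : C :=
  if Rlt_dec 0 (Im a) then (if Rlt_dec (Im b) 0 then Pe x 0 a (Copp b) else 1)
  else (if Rlt_dec (Im b) 0 then 1 else Pe x (Cminus b a) (Copp a) b).
Definition DE x a b : C :=
  if Rlt_dec 0 (Im a) then (if Rlt_dec (Im b) 0 then 1 else Pe x b a b)
  else (if Rlt_dec (Im b) 0 then Pe x (Copp a) (Copp a) (Copp b) else 1).

Lemma Im_add a b : Im (Cplus a b) = Im a + Im b. Proof. destruct a, b; reflexivity. Qed.
Lemma Im_opp a : Im (Copp a) = - Im a. Proof. destruct a; reflexivity. Qed.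

Lemma local x a b : Im a <> 0 -> Im b <> 0 -> Im (Cplus a b) <> 0 ->
  Cmult (Cmult (NE x a (Cplus a b)) (NE x (Cplus a b) b)) (DE x a b)
  = Cmult (Cmult (NE x a b) (DE x a (Cplus a b))) (DE x (Cplus a b) b).
Proof.
  intros Ha Hb Hab. pose proof (Im_add a b) as Hs.
  unfold NE, DE.
  destruct (Rlt_dec 0 (Im a)), (Rlt_dec (Im b) 0), (Rlt_dec 0 (Im (Cplus a b))), (Rlt_dec (Im (Cplus a b)) 0);
    try lra.
  - (* a+ b- ab+ : case 3 *)
    rewrite (PeL x 0 (Cplus a b) (Copp b)) by (rewrite ?Im_opp; lra).
    replace (Cplus (Cplus a b) (Copp b)) with a by ring.
    replace (Cplus 0 (Cplus a b)) with (Cplus a b) by ring. ring.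
  - (* a+ b- ab- : case 4 *)
    rewrite (Pe_sym x 0 a (Copp (Cplus a b))).
    rewrite (PeL x 0 (Copp (Cplus a b)) a) by (rewrite ?Im_opp; lra).
    replace (Cplus (Copp (Cplus a b)) a) with (Copp b) by ring.
    replace (Cplus 0 (Copp (Cplus a b))) with (Copp (Cplus a b)) by ring.
    rewrite (Pe_sym x 0 (Copp b) a), (Pe_sym x (Copp (Cplus a b)) (Copp b)). ring.
  - (* a+ b+ : case 1 *)
    rewrite (PeL x b a b) by lra.
    replace (Cplus b a) with (Cplus a b) by ring.
    rewrite (Pe_sym x (Cplus a b) (Cplus a b) a). ring.
  - (* a- b- : case 2 *)
    rewrite (Pe_sym x (Copp a) (Copp a) (Copp b)).
    rewrite (PeL x (Copp a) (Copp b) (Copp a)) by (rewrite ?Im_opp; lra).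
    replace (Cplus (Copp b) (Copp a)) with (Copp (Cplus a b)) by ring.
    replace (Cplus (Copp a) (Copp b)) with (Copp (Cplus a b)) by ring.
    rewrite (Pe_sym x (Copp a) (Copp (Cplus a b)) (Copp a)),
      (Pe_sym x (Copp (Cplus a b)) (Copp (Cplus a b)) (Copp b)). ring.
  - (* a- b+ ab+ : case 5 *)
    replace (Cminus (Cplus a b) a) with b by ring.
    rewrite (PeL x b (Copp a) (Cplus a b)) by (rewrite ?Im_opp; lra).
    replace (Cplus (Copp a) (Cplus a b)) with b by ring.
    replace (Cplus b (Copp a)) with (Cminus b a) by ring.
    rewrite (Pe_sym x b b (Cplus a b)), (Pe_sym x (Cminus b a) b (Copp a)). ring.
  - (* a- b+ ab- : case 6 *)
    replace (Cminus b (Cplus a b)) with (Copp a) by ring.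
    rewrite (Pe_sym x (Copp a) (Copp (Cplus a b)) b).
    rewrite (PeL x (Copp a) b (Copp (Cplus a b))) by (rewrite ?Im_opp; lra).
    replace (Cplus b (Copp (Cplus a b))) with (Copp a) by ring.
    replace (Cplus (Copp a) b) with (Cminus b a) by ring.
    rewrite (Pe_sym x (Cminus b a) (Copp a) b). ring.
Qed.

Lemma E_ext a b : a = b -> E a = E b. Proof. intros ->; auto. Qed.

Lemma Cinv_mul_nz (a b : C) : a <> 0 -> b <> 0 -> Cinv (Cmult a b) = Cmult (Cinv a) (Cinv b).
Proof. intros. field. split; auto. Qed.

Lemma conn x a b : Im a <> 0 -> Im b <> 0 ->
  qpoch x (cexp (Cmult two_pi_i a)) (cexp (Copp (Cmult two_pi_i b))) = Cmult (NE x a b) (Cinv (DE x a b))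
  /\ (qpoch_defined x (cexp (Cmult two_pi_i a)) (cexp (Copp (Cmult two_pi_i b))) -> DE x a b <> 0).
Proof.
  intros Ha Hb.
  change (cexp (Cmult two_pi_i a)) with (E a).
  replace (cexp (Copp (Cmult two_pi_i b))) with (E (Copp b)) by (unfold E; f_equal; ring).
  assert (Hx0 : x = Cmult x (E 0)) by (rewrite E_0; ring).
  assert (Hi1 : Cinv (E (Copp b)) = E b) by (rewrite E_inv; apply E_ext; ring).
  assert (Hi0 : Cinv (E a) = E (Copp a)) by apply E_inv.
  assert (Hd1 : Cdiv x (E (Copp b)) = Cmult x (E b)) by (unfold Cdiv; rewrite Hi1; auto).
  assert (Hd0 : Cdiv x (E a) = Cmult x (E (Copp a))) by (unfold Cdiv; rewrite Hi0; auto).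
  assert (Hd2 : Cdiv x (Cmult (E a) (E (Copp b))) = Cmult x (E (Cminus b a))).
  { unfold Cdiv. rewrite Cinv_mul_nz by apply E_nz. rewrite Hi0, Hi1, <- E_add.
    f_equal. apply E_ext. ring. }
  assert (H1 : forall c : C, Cmult c (Cinv 1) = c) by (intros; field).
  assert (H2 : (1 : C) <> 0) by (intros H; injection H; lra).
  unfold qpoch, qpoch_defined, NE, DE, Pe.
  destruct (Rlt_dec (Cmod (E a)) 1) as [A|A]; rewrite Cmod_E_lt in A;
  destruct (Rlt_dec (Cmod (E (Copp b))) 1) as [B|B]; rewrite Cmod_E_lt, Im_opp in B;
  destruct (Rlt_dec 0 (Im a)); destruct (Rlt_dec (Im b) 0); try lra.
  - rewrite H1, <- Hx0. auto.
  - rewrite Hd1, Hi1. split. ring. auto.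
  - rewrite Hd0, Hi0. split. ring. auto.
  - rewrite Hd2, Hi0, Hi1, H1. auto.
Qed.

Open Scope Z_scope.

Lemma find_peak (f : nat -> Z) n : (1 <= n)%nat -> f 0%nat < f 1%nat -> f (S n) <= f n ->
  exists i, (1 <= i <= n)%nat /\ f (i - 1)%nat < f i /\ f (S i) <= f i.
Proof.
  intros Hn H0. induction n as [|n IH]. lia.
  intros Hl. destruct (Z_le_gt_dec (f (S n)) (f n)) as [Hc|Hc].
  - destruct n. simpl in Hc. lia.
    destruct (IH ltac:(lia) Hc) as [i Hi]. exists i. lia.
  - exists (S n). replace (S n - 1)%nat with n by lia. lia.
Qed.

Lemma cross_sum (a b c : Z * Z) : zcross a b = 1 -> zcross b c = 1 ->
  fst a + fst c = zcross a c * fst b /\ snd a + snd c = zcross a c * snd b.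
Proof.
  destruct a as [a1 a2], b as [b1 b2], c as [c1 c2]. unfold zcross. simpl. intros H1 H2.
  assert (I1 : (a1 * b2 - a2 * b1) * c1 + (b1 * c2 - b2 * c1) * a1 + (c1 * a2 - c2 * a1) * b1 = 0) by ring.
  assert (I2 : (a1 * b2 - a2 * b1) * c2 + (b1 * c2 - b2 * c1) * a2 + (c1 * a2 - c2 * a1) * b2 = 0) by ring.
  rewrite H1, H2 in I1, I2. split; lia.
Qed.

Definition hgt (v w u : Z * Z) := zcross u w + zcross v u.

Lemma hgt_sum v w (a b c : Z * Z) k :
  fst a + fst c = k * fst b -> snd a + snd c = k * snd b ->
  hgt v w a + hgt v w c = k * hgt v w b.
Proof.
  destruct a as [a1 a2], b as [b1 b2], c as [c1 c2], v as [v1 v2], w as [w1 w2].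
  unfold hgt, zcross. simpl. intros H1 H2.
  replace a1 with (k * b1 - c1) by lia. replace a2 with (k * b2 - c2) by lia. ring.
Qed.

Lemma merge_exists v w n (u : nat -> Z * Z) :
  zcross v w = 1 -> u 0%nat = v -> u (S (S n)) = w ->
  (forall i, (1 <= i <= S n)%nat -> 0 < zcross (u i) w /\ 0 < zcross v (u i)) ->
  (forall i, (i <= S n)%nat -> zcross (u i) (u (S i)) = 1) ->
  exists j, (j <= n)%nat /\ zcross (u j) (u (S (S j))) = 1 /\
    fst (u (S j)) = fst (u j) + fst (u (S (S j))) /\
    snd (u (S j)) = snd (u j) + snd (u (S (S j))).
Proof.
  intros Hvw H0 Hn Hpos Hc.
  assert (Hv : hgt v w v = 1) by (unfold hgt, zcross in *; lia).
  assert (Hw : hgt v w w = 1) by (unfold hgt, zcross in *; lia).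
  assert (Hin : forall i, (1 <= i <= S n)%nat -> 2 <= hgt v w (u i)) by
    (intros i Hi; specialize (Hpos i Hi); unfold hgt; lia).
  assert (Hall : forall i, (i <= S (S n))%nat -> 1 <= hgt v w (u i)).
  { intros i Hi. destruct i. rewrite H0; lia. destruct (Nat.eq_dec (S i) (S (S n))) as [E|E].
    rewrite E, Hn; lia. specialize (Hin (S i) ltac:(lia)). lia. }
  destruct (find_peak (fun i => hgt v w (u i)) (S n)) as [i [Hi [Hlt Hle]]]. lia.
  rewrite H0, Hv. specialize (Hin 1%nat ltac:(lia)). lia.
  rewrite Hn, Hw. specialize (Hin (S n) ltac:(lia)). lia.
  destruct i as [|j]. lia. exists j. simpl in Hlt. rewrite Nat.sub_0_r in Hlt.
  destruct (cross_sum (u j) (u (S j)) (u (S (S j)))) as [E1 E2]. apply Hc; lia. apply Hc; lia.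
  pose proof (hgt_sum v w _ _ _ _ E1 E2) as Hs.
  pose proof (Hall j ltac:(lia)). pose proof (Hall (S (S j)) ltac:(lia)).
  assert (Hk : zcross (u j) (u (S (S j))) = 1) by nia.
  rewrite Hk in E1, E2. split. lia. split. auto. lia.
Qed.

Open Scope R_scope.

Lemma NE_or_DE x a b : NE x a b = 1 \/ DE x a b = 1.
Proof. unfold NE, DE. destruct (Rlt_dec 0 (Im a)), (Rlt_dec (Im b) 0); auto. Qed.

Lemma decomp1 (T : nat -> C) j m :
  cprod (S (S (j + m))) T = Cmult (Cmult (Cmult (cprod j T) (T j)) (T (S j))) (cprod m (fun k => T (j + 2 + k)%nat)).
Proof.
  replace (S (S (j + m))) with (j + (2 + m))%nat by lia.
  rewrite cprod_split, cprod_split. simpl.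
  rewrite Nat.add_0_r. replace (j + 1)%nat with (S j) by lia.
  rewrite (cprod_ext m (fun k => T (j + S (S k))%nat) (fun k => T (j + 2 + k)%nat)) by (intros; f_equal; lia).
  ring.
Qed.

Lemma decomp2 (T : nat -> C) j m :
  cprod (S (j + m)) T = Cmult (Cmult (cprod j T) (T j)) (cprod m (fun k => T (j + 1 + k)%nat)).
Proof.
  replace (S (j + m)) with (j + (1 + m))%nat by lia.
  rewrite cprod_split, cprod_split. simpl.
  rewrite Nat.add_0_r.
  rewrite (cprod_ext m (fun k => T (j + S k)%nat) (fun k => T (j + 1 + k)%nat)) by (intros; f_equal; lia).
  ring.
Qed.

Lemma chain x (om : C * C) v w (Hvw : zcross v w = 1%Z) : forall n u,
  u O = v -> u (S n) = w ->
  (forall i, (1 <= i <= n)%nat -> (0 < zcross (u i) w)%Z /\ (0 < zcross v (u i))%Z) ->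
  (forall i, (i <= n)%nat -> zcross (u i) (u (S i)) = 1%Z) ->
  (forall i, (i <= S n)%nat -> Im (ccross om (u i)) <> 0) ->
  Cmult (cprod (S n) (fun i => NE x (ccross om (u i)) (ccross om (u (S i))))) (DE x (ccross om v) (ccross om w))
  = Cmult (NE x (ccross om v) (ccross om w)) (cprod (S n) (fun i => DE x (ccross om (u i)) (ccross om (u (S i))))).
Proof.
  induction n as [|n IH]; intros u H0 Hn Hpos Hc Him.
  - simpl. rewrite H0, Hn. ring.
  - destruct (merge_exists v w n u Hvw H0 Hn Hpos Hc) as [j [Hj [Hk [E1 E2]]]].
    set (u' := fun k => if (k <=? j)%nat then u k else u (S k)).
    assert (U1 : forall k, (k <= j)%nat -> u' k = u k).
    { intros k Hk'. unfold u'. destruct (Nat.leb_spec k j); auto; lia. }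
    assert (U2 : forall k, (j < k)%nat -> u' k = u (S k)).
    { intros k Hk'. unfold u'. destruct (Nat.leb_spec k j); auto; lia. }
    assert (IH' := IH u').
    rewrite U1 in IH' by lia. rewrite U2 in IH' by lia.
    specialize (IH' H0 Hn).
    assert (P1 : forall i, (1 <= i <= n)%nat -> (0 < zcross (u' i) w)%Z /\ (0 < zcross v (u' i))%Z).
    { intros i Hi. destruct (Nat.le_gt_cases i j).
      rewrite U1 by lia. apply Hpos; lia. rewrite U2 by lia. apply Hpos; lia. }
    assert (P2 : forall i, (i <= n)%nat -> zcross (u' i) (u' (S i)) = 1%Z).
    { intros i Hi. destruct (Nat.lt_total i j) as [H|[H|H]].
      rewrite !U1 by lia. apply Hc; lia.
      subst i. rewrite U1, U2 by lia. auto.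
      rewrite !U2 by lia. apply Hc; lia. }
    assert (P3 : forall i, (i <= S n)%nat -> Im (ccross om (u' i)) <> 0).
    { intros i Hi. destruct (Nat.le_gt_cases i j).
      rewrite U1 by lia. apply Him; lia. rewrite U2 by lia. apply Him; lia. }
    specialize (IH' P1 P2 P3).
    assert (Hlin : ccross om (u (S j)) = Cplus (ccross om (u j)) (ccross om (u (S (S j))))).
    { unfold ccross. rewrite E1, E2, !plus_IZR, !RtoC_plus. ring. }
    set (a := ccross om (u j)) in *. set (b := ccross om (u (S (S j)))) in *.
    replace n with (j + (n - j))%nat in IH' |- * by lia.
    rewrite decomp1, decomp1.
    rewrite decomp2, decomp2 in IH'.
    rewrite U1 in IH' by lia. rewrite U2 in IH' by lia.
    rewrite (cprod_ext j (fun i => NE x (ccross om (u' i)) (ccross om (u' (S i))))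
                         (fun i => NE x (ccross om (u i)) (ccross om (u (S i))))) in IH'
      by (intros i Hi; rewrite !U1 by lia; auto).
    rewrite (cprod_ext j (fun i => DE x (ccross om (u' i)) (ccross om (u' (S i))))
                         (fun i => DE x (ccross om (u i)) (ccross om (u (S i))))) in IH'
      by (intros i Hi; rewrite !U1 by lia; auto).
    rewrite (cprod_ext (n - j) (fun k => NE x (ccross om (u' (j + 1 + k)%nat)) (ccross om (u' (S (j + 1 + k)))))
                         (fun k => NE x (ccross om (u (j + 2 + k)%nat)) (ccross om (u (S (j + 2 + k)))))) in IH'
      by (intros i Hi; rewrite !U2 by lia; do 3 f_equal; lia).
    rewrite (cprod_ext (n - j) (fun k => DE x (ccross om (u' (j + 1 + k)%nat)) (ccross om (u' (S (j + 1 + k)))))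
                         (fun k => DE x (ccross om (u (j + 2 + k)%nat)) (ccross om (u (S (j + 2 + k)))))) in IH'
      by (intros i Hi; rewrite !U2 by lia; do 3 f_equal; lia).
    fold a b in IH'. fold a. fold b. rewrite Hlin.
    set (A := cprod j (fun i => NE x (ccross om (u i)) (ccross om (u (S i))))) in *.
    set (A' := cprod j (fun i => DE x (ccross om (u i)) (ccross om (u (S i))))) in *.
    set (B := cprod (n - j) (fun k => NE x (ccross om (u (j + 2 + k)%nat)) (ccross om (u (S (j + 2 + k)))))) in *.
    set (B' := cprod (n - j) (fun k => DE x (ccross om (u (j + 2 + k)%nat)) (ccross om (u (S (j + 2 + k)))))) in *.
    assert (Ha : Im a <> 0) by (apply Him; lia).
    assert (Hb : Im b <> 0) by (apply Him; lia).
    assert (Hab : Im (Cplus a b) <> 0) by (rewrite <- Hlin; apply Him; lia).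
    pose proof (local x a b Ha Hb Hab) as L.
    set (N1 := NE x a (Cplus a b)) in *. set (N2 := NE x (Cplus a b) b) in *.
    set (D1 := DE x a (Cplus a b)) in *. set (D2 := DE x (Cplus a b) b) in *.
    set (N3 := NE x (ccross om v) (ccross om w)) in *. set (D3 := DE x (ccross om v) (ccross om w)) in *.
    destruct (NE_or_DE x a b) as [Hn12|Hd12].
    + rewrite Hn12 in IH', L.
      transitivity (Cmult (Cmult (Cmult (Cmult (Cmult A 1) B) D3) N1) N2). ring.
      rewrite IH'. transitivity (Cmult (Cmult (Cmult N3 A') B') (Cmult (Cmult N1 N2) (DE x a b))). ring.
      rewrite L. ring.
    + rewrite Hd12 in IH', L.
      transitivity (Cmult (Cmult (Cmult A B) D3) (Cmult (Cmult N1 N2) 1)). ring.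
      rewrite L. transitivity (Cmult (Cmult (Cmult (Cmult (Cmult A (NE x a b)) B) D3) D1) D2). ring.
      rewrite IH'. ring.
Qed.

Lemma Cmult_nz (a b : C) : a <> 0 -> b <> 0 -> Cmult a b <> 0.
Proof.
  intros Ha Hb H. apply Ha.
  replace a with (Cmult (Cmult a b) (Cinv b)) by (field; auto). rewrite H. ring.
Qed.

Lemma cprod_nz k (D : nat -> C) : (forall i, (i < k)%nat -> D i <> 0) -> cprod k D <> 0.
Proof.
  induction k; intros H; simpl.
  - intros E. injection E. lra.
  - apply Cmult_nz. apply IHk; intros; apply H; lia. apply H; lia.
Qed.

Lemma cprod_div k (N D : nat -> C) : (forall i, (i < k)%nat -> D i <> 0) ->
  Cmult (cprod k (fun i => Cmult (N i) (Cinv (D i)))) (cprod k D) = cprod k N.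
Proof.
  induction k; intros H; simpl. ring.
  rewrite <- IHk by (intros; apply H; lia).
  assert (D k <> 0) by (apply H; lia). field. auto.
Qed.

Lemma pos_conv (v w p : Z * Z) : zcross v w = 1%Z ->
  (exists a b : R, 0 < a /\ 0 < b /\
       IZR (fst p) = a * IZR (fst v) + b * IZR (fst w) /\
       IZR (snd p) = a * IZR (snd v) + b * IZR (snd w)) ->
  (0 < zcross p w)%Z /\ (0 < zcross v p)%Z.
Proof.
  intros Hvw [a [b [Ha [Hb [E1 E2]]]]].
  apply (f_equal IZR) in Hvw. unfold zcross in *. rewrite minus_IZR, !mult_IZR in Hvw.
  split; apply lt_IZR; rewrite minus_IZR, !mult_IZR.
  - rewrite E1, E2.
    replace ((a * IZR (fst v) + b * IZR (fst w)) * IZR (snd w) - (a * IZR (snd v) + b * IZR (snd w)) * IZR (fst w))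
      with (a * (IZR (fst v) * IZR (snd w) - IZR (snd v) * IZR (fst w))) by ring.
    rewrite Hvw. lra.
  - rewrite E1, E2.
    replace (IZR (fst v) * (a * IZR (snd v) + b * IZR (snd w)) - IZR (snd v) * (a * IZR (fst v) + b * IZR (fst w)))
      with (b * (IZR (fst v) * IZR (snd w) - IZR (snd v) * IZR (fst w))) by ring.
    rewrite Hvw. lra.
Qed.

Theorem proposition5p9
  (v w : Z * Z) (n : nat) (u : nat -> Z * Z) (z : C) (om : C * C)
  (hv : zprimitive v) (hw : zprimitive w) (hvw : zcross v w = 1%Z)
  (hu0 : u O = v) (hun : u (S n) = w)
  (hprim : forall i, (1 <= i <= n)%nat -> zprimitive (u i))
  (hpos : forall i, (1 <= i <= n)%nat ->
     exists a b : R, 0 < a /\ 0 < b /\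
       IZR (fst (u i)) = a * IZR (fst v) + b * IZR (fst w) /\
       IZR (snd (u i)) = a * IZR (snd v) + b * IZR (snd w))
  (hcross : forall i, (i <= n)%nat -> zcross (u i) (u (S i)) = 1%Z)
  (hom : forall i, (i <= S n)%nat -> Im (ccross om (u i)) <> 0)
  (hdefL : forall i, (i <= n)%nat ->
     qpoch_defined (cexp (Cmult two_pi_i z))
       (cexp (Cmult two_pi_i (ccross om (u i))))
       (cexp (Copp (Cmult two_pi_i (ccross om (u (S i)))))))
  (hdefR : qpoch_defined (cexp (Cmult two_pi_i z))
       (cexp (Cmult two_pi_i (ccross om v)))
       (cexp (Copp (Cmult two_pi_i (ccross om w))))) :
  cprod (S n) (fun i =>
     qpoch (cexp (Cmult two_pi_i z))
       (cexp (Cmult two_pi_i (ccross om (u i))))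
       (cexp (Copp (Cmult two_pi_i (ccross om (u (S i)))))))
  = qpoch (cexp (Cmult two_pi_i z))
       (cexp (Cmult two_pi_i (ccross om v)))
       (cexp (Copp (Cmult two_pi_i (ccross om w)))).
Proof.
  set (x := cexp (Cmult two_pi_i z)).
  set (N := fun i => NE x (ccross om (u i)) (ccross om (u (S i)))).
  set (D := fun i => DE x (ccross om (u i)) (ccross om (u (S i)))).
  assert (HvI : Im (ccross om v) <> 0) by (rewrite <- hu0; apply hom; lia).
  assert (HwI : Im (ccross om w) <> 0) by (rewrite <- hun; apply hom; lia).
  destruct (conn x _ _ HvI HwI) as [R1 R2].
  specialize (R2 hdefR).
  rewrite R1.
  assert (HD : forall i, (i < S n)%nat -> D i <> 0).
  { intros i Hi. destruct (conn x (ccross om (u i)) (ccross om (u (S i)))) as [_ Q].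
    apply hom; lia. apply hom; lia. apply Q. apply hdefL. lia. }
  rewrite (cprod_ext (S n) _ (fun i => Cmult (N i) (Cinv (D i)))).
  2:{ intros i Hi. apply conn; apply hom; lia. }
  assert (Hch := chain x om v w hvw n u hu0 hun (fun i Hi => pos_conv v w (u i) hvw (hpos i Hi)) hcross hom).
  fold N D in Hch.
  pose proof (cprod_div (S n) N D HD) as Hdiv.
  pose proof (cprod_nz (S n) D HD) as Hnz.
  set (X := cprod (S n) (fun i => Cmult (N i) (Cinv (D i)))) in *.
  set (PN := cprod (S n) N) in *. set (PD := cprod (S n) D) in *.
  set (N3 := NE x (ccross om v) (ccross om w)) in *. set (D3 := DE x (ccross om v) (ccross om w)) in *.
  transitivity (Cmult (Cmult (Cmult X PD) D3) (Cmult (Cinv PD) (Cinv D3))).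
  field. split; auto.
  rewrite Hdiv, Hch. field. split; auto.
Qed.
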